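(* Let $n_1,n_2,m_1,m_2$ be positive integers with $\gcd(n_1,n_2)=\gcd(m_1,m_2)=1$. If $f_1:\mathcal{D}(n_1)\to\mathcal{D}(m_1)$ and $f_2:\mathcal{D}(n_2)\to\mathcal{D}(m_2)$ are reducing, then so is $f_1f_2:\mathcal{D}(n_1n_2)\to\mathcal{D}(m_1m_2)$, defined by $(f_1f_2)(d_1d_2)=f_1(d_1)f_2(d_2)$ for $d_1\in\mathcal{D}(n_1)$, $d_2\in\mathcal{D}(n_2)$.
   Context: For a positive integer $n$, $\mathcal{D}(n)$ is the set of positive divisors of $n$, and $\lambda(n)$ is the least prime factor of $n$ if $n\ge2$, with $\lambda(1)=1$. For positive integers $m,n$, a function $f:\mathcal{D}(n)\to\mathcal{D}(m)$ is called reducing if for all $d,d'\in\mathcal{D}(n)$: (a) $f(d)\le d$; (b) $\frac{m/f(d)}{n/d}\le\min\{1,\ \lambda(m/f(d))/\lambda(n/d)\}$; (c) if $f(d)=2^if(d')$ for some $i\in\mathbb{Z}$, then $d=2^jd'$ for some $j\in\mathbb{Z}$. *)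

(* Defs.v *)
From mathcomp Require Import all_boot all_order all_algebra.
Set Implicit Arguments. Unset Strict Implicit. Unset Printing Implicit Defensive.
Import Order.TTheory GRing.Theory Num.Theory.

Definition lpf (n : nat) : nat := if 2 <= n then pdiv n else 1.

(* f : D(n) -> D(m) is represented by a function nat -> nat that maps
   every positive divisor of n to a (positive) divisor of m. *)
Definition maps_divisors (n m : nat) (f : nat -> nat) : Prop :=
  forall d, d %| n -> f d %| m.

Local Open Scope ring_scope.

Definition reducing (n m : nat) (f : nat -> nat) : Prop :=
  maps_divisors n m f /\
  forall d d' : nat, (d %| n)%N -> (d' %| n)%N ->
    [/\ (f d <= d)%N,
        ((m %/ f d)%:R / (n %/ d)%:R : rat)
          <= Num.min 1 ((lpf (m %/ f d))%:R / (lpf (n %/ d))%:R)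
      & (exists i : int, (f d)%:R = (2%:R : rat) ^ i * (f d')%:R) ->
        exists j : int, (d%:R : rat) = 2%:R ^ j * d'%:R].

(* The product function f1 f2 on D(n1 n2): a divisor d of n1 n2 (gcd n1 n2 = 1)
   is uniquely d = d1 d2 with d1 = gcd(d,n1) | n1, d2 = gcd(d,n2) | n2. *)
Definition prod_fun (n1 n2 : nat) (f1 f2 : nat -> nat) (d : nat) : nat :=
  (f1 (gcdn d n1) * f2 (gcdn d n2))%N.

(* Main.v *)
Require Import Defs.
From mathcomp Require Import all_boot all_order all_algebra.
Import GRing.Theory Num.Theory Order.TTheory.

Lemma two_pow_rat (x y : nat) :
  (exists i : int, (x%:R : rat) = (2%:R : rat) ^ i * y%:R)%R <->
  exists k, x = 2 ^ k * y \/ y = 2 ^ k * x.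
Proof.
split.
- case=> [[k|k] e].
  + exists k; left.
    suff: ((x%:R : rat) = (2 ^ k * y)%:R)%R by move/eqP; rewrite eqr_nat => /eqP.
    by rewrite e natrM natrX.
  + exists k.+1; right.
    suff: ((y%:R : rat) = (2 ^ k.+1 * x)%:R)%R by move/eqP; rewrite eqr_nat => /eqP.
    rewrite natrM natrX e NegzE -exprnN mulrA mulfV ?mul1r //.
    by rewrite expf_neq0 // pnatr_eq0.
- case=> k [e|e].
  + exists (Posz k); rewrite e natrM natrX; done.
  + exists (- Posz k)%R; rewrite e natrM natrX -exprnN mulrA mulVf ?mul1r //.
    by rewrite expf_neq0 // pnatr_eq0.
Qed.

Lemma odd2 k : (2 ^ k)`_(2^') = 1.
Proof. by apply: part_p'nat; rewrite pnatNK pnatX pnat_id. Qed.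

Lemma rel_odd x y : 0 < x -> 0 < y ->
  (exists k, x = 2 ^ k * y \/ y = 2 ^ k * x) <-> x`_(2^') = y`_(2^').
Proof.
move=> hx hy; split.
- case=> k [->|->]; rewrite partnM ?expn_gt0 // odd2 mul1n //.
- move=> E.
  rewrite -(partnC 2 hx) -(partnC 2 hy) !p_part E.
  case: (leqP (logn 2 x) (logn 2 y)) => h.
  + exists (logn 2 y - logn 2 x); right; by rewrite mulnA -expnD subnK.
  + exists (logn 2 x - logn 2 y); left; by rewrite mulnA -expnD subnK // ltnW.
Qed.

Lemma c_comb m1 m2 u1 u2 v1 v2 : 0 < m1 -> 0 < m2 -> coprime m1 m2 ->
  u1 %| m1 -> v1 %| m1 -> u2 %| m2 -> v2 %| m2 ->
  (u1 * u2)`_(2^') = (v1 * v2)`_(2^') ->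
  u1`_(2^') = v1`_(2^') /\ u2`_(2^') = v2`_(2^').
Proof.
move=> hm1 hm2 cm du1 dv1 du2 dv2.
have pu1 := dvdn_gt0 hm1 du1; have pv1 := dvdn_gt0 hm1 dv1.
have pu2 := dvdn_gt0 hm2 du2; have pv2 := dvdn_gt0 hm2 dv2.
rewrite !partnM // => E.
have key : forall a b, a %| m1 -> b %| m2 -> gcdn m1 (a`_(2^') * b`_(2^')) = a`_(2^').
  move=> a b ha hb; rewrite Gauss_gcdl; last first.
    by apply: (coprime_dvdr (dvdn_trans (dvdn_part _ _) hb)).
  by apply/gcdn_idPr; apply: dvdn_trans (dvdn_part _ _) ha.
have E1 : u1`_(2^') = v1`_(2^') by rewrite -(key _ _ du1 du2) E key.
split=> //; apply/eqP; rewrite -(eqn_pmul2l (part_gt0 (2^') u1)).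
by rewrite {2}E1 E.
Qed.

Lemma decomp n1 n2 d : coprime n1 n2 -> d %| n1 * n2 ->
  gcdn d n1 * gcdn d n2 = d.
Proof.
move=> co dv; apply/eqP; rewrite eqn_dvd; apply/andP; split.
- rewrite Gauss_dvd ?dvdn_gcdl //.
  apply: (coprime_dvdl (dvdn_gcdr _ _)); exact: (coprime_dvdr (dvdn_gcdr _ _)).
- have h1 : d %| gcdn d n1 * n2.
    by rewrite muln_gcdl dvdn_gcd dv dvdn_mulr.
  by rewrite muln_gcdr dvdn_gcd h1 dvdn_mull.
Qed.

Lemma split_div n1 n2 d : coprime n1 n2 -> d %| n1 * n2 ->
  exists d1 d2, [/\ d = d1 * d2, d1 %| n1 & d2 %| n2].
Proof.
move=> co dv; exists (gcdn d n1), (gcdn d n2); split; rewrite ?dvdn_gcdr //.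
by rewrite decomp.
Qed.

Lemma prodE n1 n2 f1 f2 d1 d2 : coprime n1 n2 -> d1 %| n1 -> d2 %| n2 ->
  prod_fun n1 n2 f1 f2 (d1 * d2) = f1 d1 * f2 d2.
Proof.
move=> co h1 h2; rewrite /prod_fun.
rewrite gcdnC Gauss_gcdl; last by apply: (coprime_dvdr h2).
rewrite gcdnC (gcdn_idPl h1).
rewrite (gcdnC _ n2) Gauss_gcdr; last by apply: (coprime_dvdr h1); rewrite coprime_sym.
by rewrite gcdnC (gcdn_idPl h2).
Qed.

Lemma divMM a b x y : 0 < a -> 0 < b -> a %| x -> b %| y ->
  (x * y) %/ (a * b) = (x %/ a) * (y %/ b).
Proof.
move=> ha hb hx hy.
by rewrite -{1}(divnK hx) -{1}(divnK hy) mulnACA mulnK // muln_gt0 ha hb.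
Qed.

Lemma lpf_gt0 n : 0 < lpf n.
Proof. by rewrite /lpf; case: ifP => // _; apply: pdiv_gt0. Qed.

Lemma lpf_le n : 0 < n -> lpf n <= n.
Proof. by move=> h; rewrite /lpf; case: ifP => // _; apply: pdiv_leq. Qed.

Lemma rat_ineq (x y p q : nat) : 0 < y -> 0 < q ->
  ((x%:R / y%:R : rat) <= Num.min 1 (p%:R / q%:R))%R = (x <= y) && (x * q <= p * y).
Proof.
move=> hy hq.
have hy' : (0 < y%:R :> rat)%R by rewrite ltr0n.
have hq' : (0 < q%:R :> rat)%R by rewrite ltr0n.
rewrite le_min ler_pdivrMr // mul1r ler_nat.
by rewrite ler_pdivrMr // mulrAC ler_pdivlMr // -!natrM ler_nat.
Qed.

Lemma muln_gt0_helper a b : 0 < a -> 0 < b -> 0 < a * b.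
Proof. by move=> ha hb; rewrite muln_gt0 ha hb. Qed.

Lemma lpfE n : 1 < n -> lpf n = pdiv n.
Proof. by rewrite /lpf => ->. Qed.

Lemma key1 a1 a2 b1 b2 : 0 < b2 -> 1 < a1 * a2 -> pdiv (a1 * a2) %| a1 ->
  a1 <= b1 -> a1 * lpf b1 <= lpf a1 * b1 -> a2 <= b2 ->
  a1 * a2 * lpf (b1 * b2) <= lpf (a1 * a2) * (b1 * b2).
Proof.
move=> hb2 h hp h1 h1' h2.
have pp := pdiv_prime h.
have pa : 0 < a1 * a2 by apply: ltnW.
have a1p : 0 < a1 by move: pa; rewrite muln_gt0 => /andP[].
have a1g : 1 < a1 by apply: leq_trans (prime_gt1 pp) (dvdn_leq a1p hp).
have b1g : 1 < b1 by apply: leq_trans a1g h1.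
have hA : lpf a1 <= lpf (a1 * a2).
  by rewrite (lpfE _ a1g) (lpfE _ h); apply: pdiv_min_dvd => //; apply: prime_gt1.
have hX : lpf (b1 * b2) <= lpf b1.
  have bg : 1 < b1 * b2 by apply: leq_trans b1g (leq_pmulr _ hb2).
  rewrite (lpfE _ b1g) (lpfE _ bg); apply: pdiv_min_dvd.
    by apply: prime_gt1; apply: pdiv_prime.
  by apply: dvdn_mulr; apply: pdiv_dvd.
apply: (@leq_trans (a1 * a2 * lpf b1)); first by apply: leq_mul.
rewrite mulnAC.
apply: (@leq_trans (lpf a1 * b1 * b2)); first by apply: leq_mul.
by rewrite mulnA; apply: leq_mul => //; apply: leq_mul.
Qed.

Lemma nat_key a1 a2 b1 b2 : 0 < b1 -> 0 < b2 ->
  a1 <= b1 -> a1 * lpf b1 <= lpf a1 * b1 ->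
  a2 <= b2 -> a2 * lpf b2 <= lpf a2 * b2 ->
  a1 * a2 * lpf (b1 * b2) <= lpf (a1 * a2) * (b1 * b2).
Proof.
move=> hb1 hb2 h1 h1' h2 h2'.
case: (ltnP 1 (a1 * a2)) => h; last first.
  have -> : lpf (a1 * a2) = 1 by rewrite /lpf ltnNge h.
  have hb : 0 < b1 * b2 by rewrite muln_gt0 hb1.
  by rewrite mul1n; apply: (leq_trans (leq_mul h (lpf_le _ hb))); rewrite mul1n.
have pp := pdiv_prime h.
have := pdiv_dvd (a1 * a2); rewrite (Euclid_dvdM _ _ pp) => /orP[hp|hp].
  exact: key1.
rewrite [a1 * a2]mulnC [b1 * b2]mulnC; apply: key1 => //; by rewrite mulnC.
Qed.

Arguments split_div {n1 n2 d}.
Arguments divMM {a b x y}.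
Arguments c_comb {m1 m2 u1 u2 v1 v2}.
Arguments rel_odd {x y}.
Arguments muln_gt0_helper {a b}.

Theorem lemma3p6 (n1 n2 m1 m2 : nat) (f1 f2 : nat -> nat) :
  (0 < n1)%N -> (0 < n2)%N -> (0 < m1)%N -> (0 < m2)%N ->
  coprime n1 n2 -> coprime m1 m2 ->
  reducing n1 m1 f1 -> reducing n2 m2 f2 ->
  reducing (n1 * n2) (m1 * m2) (prod_fun n1 n2 f1 f2) /\
  (forall d1 d2, d1 %| n1 -> d2 %| n2 ->
     prod_fun n1 n2 f1 f2 (d1 * d2) = f1 d1 * f2 d2).
Proof.
move=> n1p n2p m1p m2p cn cm [M1 R1] [M2 R2].
have PE d1 d2 : d1 %| n1 -> d2 %| n2 ->
    prod_fun n1 n2 f1 f2 (d1 * d2) = f1 d1 * f2 d2 by exact: prodE.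
split=> //; split.
  move=> d dv; have [d1 [d2 [-> h1 h2]]] := split_div cn dv.
  by rewrite PE //; exact: dvdn_mul (M1 _ h1) (M2 _ h2).
move=> d d' dv dv'.
have [d1 [d2 [-> h1 h2]]] := split_div cn dv.
have [e1 [e2 [-> k1 k2]]] := split_div cn dv'.
rewrite !PE //.
have [a1 b1 c1] := R1 _ _ h1 k1.
have [a2 b2 c2] := R2 _ _ h2 k2.
have d1p := dvdn_gt0 n1p h1; have d2p := dvdn_gt0 n2p h2.
have e1p := dvdn_gt0 n1p k1; have e2p := dvdn_gt0 n2p k2.
have u1 := M1 _ h1; have u2 := M2 _ h2; have v1 := M1 _ k1; have v2 := M2 _ k2.
have pu1 := dvdn_gt0 m1p u1; have pu2 := dvdn_gt0 m2p u2.
have pv1 := dvdn_gt0 m1p v1; have pv2 := dvdn_gt0 m2p v2.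
split.
- exact: leq_mul.
- rewrite (divMM pu1 pu2 u1 u2) (divMM d1p d2p h1 h2).
  have q1 : 0 < n1 %/ d1 by rewrite divn_gt0 // dvdn_leq.
  have q2 : 0 < n2 %/ d2 by rewrite divn_gt0 // dvdn_leq.
  move: b1 b2; rewrite rat_ineq ?lpf_gt0 // => /andP[x1 y1].
  rewrite rat_ineq ?lpf_gt0 // => /andP[x2 y2].
  rewrite rat_ineq ?lpf_gt0 ?muln_gt0 ?q1 ?q2 //.
  rewrite leq_mul //=. exact: nat_key.
- move/two_pow_rat/(rel_odd (muln_gt0_helper pu1 pu2) (muln_gt0_helper pv1 pv2)) => E.
  have [o1 o2] := c_comb m1p m2p cm u1 v1 u2 v2 E.
  have j1 := c1 (proj2 (two_pow_rat _ _) (proj2 (rel_odd pu1 pv1) o1)).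
  have j2 := c2 (proj2 (two_pow_rat _ _) (proj2 (rel_odd pu2 pv2) o2)).
  move: j1 j2 => /two_pow_rat/(rel_odd d1p e1p) j1 /two_pow_rat/(rel_odd d2p e2p) j2.
  apply/two_pow_rat; apply/(rel_odd (muln_gt0_helper d1p d2p) (muln_gt0_helper e1p e2p)).
  by rewrite !partnM // j1 j2.
Qed.
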